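(* Let $\mathcal F\subseteq\binom{[n]}{k}$ be a left-compressed $t$-intersecting family, let $g(\mathcal F)\in G_*(\mathcal F)$ and $s=s^+(g(\mathcal F))$. Suppose $g^*_i(\mathcal F)\ne\emptyset$, let $j=s+t-i\ne i$, and let $\mathcal F_1=\mathcal F\cup\mathscr D(g^*_i(\mathcal F)')\setminus\mathscr D(g^*_j(\mathcal F))$. Then \begin{align*} \zeta_{k-1}(\mathcal F_1)-\zeta_{k-1}(\mathcal F)\ \ge\ & |g^*_i(\mathcal F)|\binom{n-s}{k-i}\binom{n-s-k+i}{2}+\zeta_{i-1,s}(g^*_i(\mathcal F),\mathcal F|_{[s]})\binom{n-s}{k-i+1}\\ &+|g^*_i(\mathcal F)|(s-i+1)(k-i+1)\binom{n-s}{k-i+1}-|g^*_j(\mathcal F)|\binom{n-s}{k-j-1}\binom{n-s-k+j+1}{2}\\ &-\zeta_{j-1,s}(g^*_j(\mathcal F),\mathcal F|_{[s]})\binom{n-s}{k-j}-|g^*_j(\mathcal F)|(s-j)(k-j+1)\binom{n-s}{k-j}. \end{align*}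
   Context: $[m]=\{1,\dots,m\}$, $[a,b]=\{a,\dots,b\}$. A family is $t$-intersecting if any two members share at least $t$ elements; left-compressed means invariant under all shifts $\Delta_{ij}$, $1\le i<j\le n$, where $\delta_{ij}(A)=(A\setminus\{j\})\cup\{i\}$ if $j\in A$, $i\notin A$, $(A\setminus\{j\})\cup\{i\}\notin\mathcal F$, else $\delta_{ij}(A)=A$, and $\Delta_{ij}(\mathcal F)=\{\delta_{ij}(A):A\in\mathcal F\}$. Generating sets: for $E\subseteq[n]$, $\mathcal U(E)=\{A\subseteq[n]:E\subseteq A\}$, $s^+(E)=\max E$; for a family $\mathcal E$, $\mathcal U(\mathcal E)=\bigcup_{E\in\mathcal E}\mathcal U(E)$ and $s^+(\mathcal E)=\max_{E\in\mathcal E}s^+(E)$. A family $g(\mathcal F)\subseteq\bigcup_{i\le k}\binom{[n]}{i}$ is a generating set of $\mathcal F$ if $\mathcal U(g(\mathcal F))\cap\binom{[n]}{k}=\mathcal F$; $G(\mathcal F)$ is the set of all generating sets. Let $s=\min\{s^+(g):g\in G(\mathcal F)\}$, and $G_*(\mathcal F)$ the set of $g\in G(\mathcal F)$ such that $g$ equals its set of inclusion-minimal elements (an antichain) and $s^+(g)=s$. Put $\mathcal F|_{[s]}=\{F\cap[s]:F\in\mathcal F\}$. For $g(\mathcal F)\in G_*(\mathcal F)$: $g^*(\mathcal F)=\{E\in g(\mathcal F):s\in E\}$, $g^*_i(\mathcal F)=\{E\in g^*(\mathcal F):|E|=i\}$, $g^*_i(\mathcal F)'=\{E\setminus\{s\}:E\in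 g^*_i(\mathcal F)\}$. For $E\subseteq[n]$, $\mathscr D(E)=\{B\in\binom{[n]}{k}: B\cap[s^+(E)]=E\}$, and $\mathscr D(\mathcal E)=\bigcup_{E\in\mathcal E}\mathscr D(E)$. For families $\mathcal F,\mathcal G\subseteq 2^{[n]}$ and integers $u,v$: $\zeta_u(\mathcal F,\mathcal G)$ is the number of unordered pairs $\{F,G\}$ with $F\in\mathcal F$, $G\in\mathcal G$, $|F|=|G|=u+1$, $|F\cap G|=u$; $\zeta_{u,v}(\mathcal F,\mathcal G)$ counts those pairs with additionally $v\in F\cap G$; $\zeta_u(\mathcal F)=\zeta_u(\mathcal F,\mathcal F)$. In particular $\zeta_{k-1}(\mathcal F)$ is the number of unordered pairs of members of $\mathcal F$ meeting in $k-1$ elements. *)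

(* Defs.v *)
(* Ground set [n] = {1,...,n} is modelled by 'I_n, the
   ordinal x : 'I_n standing for the integer x+1 (see [lab]). *)
From mathcomp Require Import all_boot all_order all_algebra.
Set Implicit Arguments. Unset Strict Implicit. Unset Printing Implicit Defensive.

Section Defs.
Variable n : nat.
Local Notation fam := {set {set 'I_n}}.

Definition lab (x : 'I_n) : nat := x.+1.

Definition initseg (m : nat) : {set 'I_n} := [set x | lab x <= m].

Definition memlab (v : nat) (E : {set 'I_n}) : bool := [exists x in E, lab x == v].

Definition uniform (k : nat) (F : fam) : Prop := forall A, A \in F -> #|A| = k.

Definition t_intersecting (t : nat) (F : fam) : Prop :=
  forall A B, A \in F -> B \in F -> t <= #|A :&: B|.

Definition delta (F : fam) (i j : 'I_n) (A : {set 'I_n}) : {set 'I_n} :=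
  if [&& j \in A, i \notin A & ((A :\ j) :|: [set i]) \notin F]
  then (A :\ j) :|: [set i] else A.

Definition Delta (i j : 'I_n) (F : fam) : fam := [set delta F i j A | A in F].

Definition left_compressed (F : fam) : Prop :=
  forall i j : 'I_n, i < j -> Delta i j F = F.

(* s^+(E) = max E (0 for the empty set) *)
Definition splus (E : {set 'I_n}) : nat := \max_(x in E) lab x.
Definition splusF (G : fam) : nat := \max_(E in G) splus E.

Definition upk (k : nat) (G : fam) : fam :=
  [set A : {set 'I_n} | (#|A| == k) && [exists E in G, E \subset A]].

Definition is_gen (k : nat) (F G : fam) : Prop :=
  (forall E, E \in G -> #|E| <= k) /\ upk k G = F.

Definition minimal_elts (G : fam) : fam :=
  [set E in G | [forall E' in G, (E' \subset E) ==> (E' == E)]].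

Definition in_Gstar (k : nat) (F G : fam) : Prop :=
  is_gen k F G /\ G = minimal_elts G /\
  (forall G', is_gen k F G' -> splusF G <= splusF G').

Definition gstar_i (G : fam) (i : nat) : fam :=
  [set E in G | memlab (splusF G) E && (#|E| == i)].

Definition gstar_i' (G : fam) (i : nat) : fam :=
  [set E :\: [set x | lab x == splusF G] | E in gstar_i G i].

Definition restr (F : fam) (s : nat) : fam := [set A :&: initseg s | A in F].

Definition Dset (k : nat) (E : {set 'I_n}) : fam :=
  [set B : {set 'I_n} | (#|B| == k) && (B :&: initseg (splus E) == E)].
Definition DsetF (k : nat) (G : fam) : fam := \bigcup_(E in G) Dset k E.

Definition zeta (u : nat) (F G : fam) : nat :=
  #|[set P : {set {set 'I_n}} | [exists A in F, exists B in G,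
      [&& P == [set A; B], #|A| == u.+1, #|B| == u.+1 & #|A :&: B| == u]]]|.

Definition zetav (u v : nat) (F G : fam) : nat :=
  #|[set P : {set {set 'I_n}} | [exists A in F, exists B in G,
      [&& P == [set A; B], #|A| == u.+1, #|B| == u.+1, #|A :&: B| == u
        & memlab v (A :&: B)]]]|.
End Defs.

(* binomial coefficient with integer lower index (0 if negative) *)
Definition binz (m : nat) (r : int) : nat :=
  match r with Posz r' => 'C(m, r') | Negz _ => 0 end.

(* Main.v *)
Require Import Defs.
From mathcomp Require Import all_boot all_order all_algebra.
From mathcomp Require Import zify.
From Stdlib Require Import Lia.
Import GRing.Theory Num.Theory.
Import Order.TTheory.
Set Implicit Arguments. Unset Strict Implicit. Unset Printing Implicit Defensive.

Lemma card_dep (T1 T2 : finType) (P : pred T1) (Q : T1 -> pred T2) :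
  #|[set x : T1 * T2 | P x.1 && Q x.1 x.2]| = \sum_(a | P a) #|[set b | Q a b]|.
Proof.
rewrite -sum1_card.
rewrite (eq_bigl (fun x : T1 * T2 => P x.1 && Q x.1 x.2)); last by move=> x; rewrite inE.
rewrite -(pair_big_dep P Q (fun _ _ => 1)) /=.
apply: eq_bigr => a _; rewrite -sum1_card; apply: eq_bigl => b; by rewrite inE.
Qed.

Lemma card_dep_const (T1 T2 : finType) (P : pred T1) (Q : T1 -> pred T2) c :
  (forall a, P a -> #|[set b | Q a b]| = c) ->
  #|[set x : T1 * T2 | P x.1 && Q x.1 x.2]| = #|P| * c.
Proof.
move=> h; rewrite card_dep (eq_bigr (fun _ => c)) //. by rewrite sum_nat_const.
Qed.

Lemma card_initseg n m : m <= n -> #|[set x : 'I_n | x < m]| = m.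
Proof.
move=> hm.
have -> : [set x : 'I_n | x < m] = [set widen_ord hm y | y in 'I_m].
  apply/setP=> x; rewrite inE; apply/idP/imsetP.
  - move=> hx; exists (Ordinal hx) => //; by apply: val_inj.
  - by case=> y _ ->; rewrite /= ltn_ord.
rewrite card_imset ?card_ord //. move=> a b h; apply: val_inj; by have /= := congr1 val h.
Qed.

Lemma cardsU_disj (T : finType) (A B : {set T}) :
  A :&: B = set0 -> #|A :|: B| = #|A| + #|B|.
Proof. by move=> h; rewrite cardsU h cards0 subn0. Qed.

Section Main.
Variables (n k : nat) (F g : {set {set 'I_n}}) (sx : 'I_n).
Local Notation s := (lab sx).
Local Notation Iseg := (initseg n (lab sx)).
Local Notation H := (~: initseg n (lab sx)).

Lemma inIseg x : (x \in Iseg) = (x <= sx).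
Proof. by rewrite inE /lab ltnS. Qed.
Lemma inH x : (x \in H) = (sx < x).
Proof. by rewrite inE inIseg ltnNge. Qed.

Lemma trI (E Y : {set 'I_n}) : E \subset Iseg -> Y \subset H -> (E :|: Y) :&: Iseg = E.
Proof.
move=> hE hY; apply/setP=> y; rewrite in_setI in_setU.
case hy: (y \in E); first by rewrite (subsetP hE y hy).
case hy2: (y \in Y) => //=. by have := subsetP hY y hy2; rewrite inE => /negbTE ->.
Qed.
Lemma trH (E Y : {set 'I_n}) : E \subset Iseg -> Y \subset H -> (E :|: Y) :&: H = Y.
Proof.
move=> hE hY; apply/setP=> y; rewrite in_setI in_setU.
case hy2: (y \in Y); first by have := subsetP hY y hy2 => ->; rewrite orbT.
case hy: (y \in E) => //=. by rewrite inE (subsetP hE y hy).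
Qed.
Lemma disjIH (E Y : {set 'I_n}) : E \subset Iseg -> Y \subset H -> E :&: Y = set0.
Proof.
move=> hE hY; apply/setP=> y; rewrite in_setI in_set0.
case hy: (y \in E) => //=; have := subsetP hE y hy => h.
apply/negP=> hy2; have := subsetP hY y hy2; by rewrite inE h.
Qed.
Lemma cardEY (E Y : {set 'I_n}) : E \subset Iseg -> Y \subset H -> #|E :|: Y| = #|E| + #|Y|.
Proof. by move=> hE hY; rewrite cardsU_disj // disjIH. Qed.

Lemma card_Iseg : #|Iseg| = s.
Proof.
rewrite (_ : Iseg = [set x : 'I_n | x < s]); last by apply/setP=> x; rewrite inIseg.
exact: card_initseg (ltn_ord sx).
Qed.
Lemma card_H : #|H| = n - s.
Proof. by rewrite cardsCs setCK card_Iseg card_ord. Qed.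

Definition Ys (q : nat) := [set Y : {set 'I_n} | (Y \subset H) && (#|Y| == q)].
Lemma card_Ys q : #|Ys q| = 'C(n - s, q).
Proof. by rewrite cards_draws card_H. Qed.

Definition DA (G : {set {set 'I_n}}) (p : nat) : {set {set 'I_n} * ({set 'I_n} * {set 'I_n})} :=
  [set x : {set 'I_n} * ({set 'I_n} * {set 'I_n}) | (x.1 \in G) && (((x.2.1 \subset H) && (#|x.2.1| == p)) && ((x.2.2 \subset H :\: x.2.1) && (#|x.2.2| == 2)))].

Lemma card_DA G p : #|DA G p| = #|G| * ('C(n - s, p) * 'C(n - s - p, 2)).
Proof.
rewrite /DA (card_dep_const (P := fun E : {set 'I_n} => E \in G)
   (Q := fun _ (y : {set 'I_n} * {set 'I_n}) => ((y.1 \subset H) && (#|y.1| == p)) && ((y.2 \subset H :\: y.1) && (#|y.2| == 2)))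
   (c := 'C(n - s, p) * 'C(n - s - p, 2))).
  by rewrite cardE.
move=> E _.
rewrite (card_dep_const (P := fun Z : {set 'I_n} => (Z \subset H) && (#|Z| == p))
   (Q := fun Z (D : {set 'I_n}) => (D \subset H :\: Z) && (#|D| == 2)) (c := 'C(n - s - p, 2))).
  by rewrite -card_Ys /Ys cardsE.
move=> Z /andP [hZ /eqP hp].
rewrite cards_draws cardsD card_H (setIidPr hZ) hp //.
Qed.

Definition DB (G : {set {set 'I_n}}) (q : nat) (U : {set 'I_n} -> {set 'I_n} -> {set 'I_n})
  (V : {set 'I_n} -> {set 'I_n}) : {set ({set 'I_n} * {set 'I_n}) * ('I_n * 'I_n)} :=
  [set x : ({set 'I_n} * {set 'I_n}) * ('I_n * 'I_n) | ((x.1.1 \in G) && ((x.1.2 \subset H) && (#|x.1.2| == q))) &&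
           ((x.2.1 \in U x.1.1 x.1.2) && (x.2.2 \in V x.1.1))].

Lemma card_DB (G : {set {set 'I_n}}) q (U : {set 'I_n} -> {set 'I_n} -> {set 'I_n})
  (V : {set 'I_n} -> {set 'I_n}) cu cv :
  (forall (E Y : {set 'I_n}), E \in G -> Y \subset H -> #|Y| = q -> #|U E Y| = cu) ->
  (forall E : {set 'I_n}, E \in G -> #|V E| = cv) ->
  #|DB G q U V| = #|G| * 'C(n - s, q) * (cu * cv).
Proof.
move=> hU hV.
rewrite /DB (card_dep_const (P := fun x : {set 'I_n} * {set 'I_n} => (x.1 \in G) && ((x.2 \subset H) && (#|x.2| == q)))
   (Q := fun (x : {set 'I_n} * {set 'I_n}) (y : 'I_n * 'I_n) => (y.1 \in U x.1 x.2) && (y.2 \in V x.1)) (c := cu * cv)).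
  congr (_ * _).
  rewrite -[LHS]cardsE.
  rewrite (card_dep_const (P := fun E : {set 'I_n} => E \in G)
   (Q := fun _ (Y : {set 'I_n}) => (Y \subset H) && (#|Y| == q)) (c := 'C(n - s, q))).
    by rewrite cardE.
  by move=> E _; rewrite -card_Ys.
move=> [E Y] /= /andP [hE /andP [hY /eqP hq]].
rewrite -(hU E Y hE hY hq) -(hV E hE) -cardsX; apply: eq_card => y; by rewrite !inE.
Qed.

Definition DC (Z : {set {set {set 'I_n}}}) (q : nat) := setX Z (Ys q).
Lemma card_DC (Z : {set {set {set 'I_n}}}) q : #|DC Z q| = #|Z| * 'C(n - s, q).
Proof. by rewrite cardsX card_Ys. Qed.

Definition fA (c : {set 'I_n} -> {set 'I_n}) (x : {set 'I_n} * ({set 'I_n} * {set 'I_n})) :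
  {set {set 'I_n}} := [set c x.1 :|: x.2.1 :|: [set d] | d in x.2.2].
Definition fB (c : {set 'I_n} -> {set 'I_n}) (x : ({set 'I_n} * {set 'I_n}) * ('I_n * 'I_n)) :
  {set {set 'I_n}} := [set c x.1.1 :|: x.1.2; (c x.1.1 :|: x.1.2) :\ x.2.1 :|: [set x.2.2]].
Definition fC (c : {set 'I_n} -> {set 'I_n}) (x : {set {set 'I_n}} * {set 'I_n}) :
  {set {set 'I_n}} := [set c X :|: x.2 | X in x.1].

Hypothesis hF : forall A, (A \in F) = (#|A| == k) && [exists E in g, E \subset A].
Hypothesis hanti : forall E E', E \in g -> E' \in g -> E' \subset E -> E' = E.
Hypothesis hIs : forall E, E \in g -> E \subset Iseg.
Hypothesis hcomp : forall A (a b : 'I_n), A \in F -> a < b -> b \in A -> a \notin A ->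
  A :\ b :|: [set a] \in F.

Lemma inF_sup (E A : {set 'I_n}) : E \in g -> E \subset A -> #|A| = k -> A \in F.
Proof. move=> hE hEA hA; rewrite hF hA eqxx /=; apply/existsP; exists E; by rewrite hE hEA. Qed.

Lemma inF_gen (A : {set 'I_n}) : A \in F -> #|A| = k /\ exists2 E, E \in g & E \subset A.
Proof.
rewrite hF => /andP [/eqP -> /existsP [E /andP [h1 h2]]]; split=> //; by exists E.
Qed.

Lemma gen_shift (E0 : {set 'I_n}) (z : 'I_n) (X : {set 'I_n}) : E0 \in g -> sx \in E0 -> z \in Iseg -> z != sx -> z \notin E0 ->
  #|X| = k -> (E0 :\ sx :|: [set z]) \subset X -> X \in F.
Proof.
move=> hE0 hsx hz hzs hzE hX hsub.
have hzX : z \in X by apply: (subsetP hsub); rewrite !inE eqxx orbT.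
case hsX: (sx \in X).
  apply: (inF_sup hE0) => //; apply/subsetP=> e he.
  case: (e =P sx) => [->|/eqP hne] //; apply: (subsetP hsub); by rewrite !inE hne he.
set X' := X :\ z :|: [set sx].
have hX' : #|X'| = k.
  rewrite /X' setUC cardsU1 in_setD1 hsX andbF /= add1n.
  by move: hX; rewrite (cardsD1 z X) hzX add1n => <-.
have hE0X' : X' \in F.
  apply: (inF_sup hE0) => //; apply/subsetP=> e he; rewrite /X' !inE.
  case: (e =P sx) => [->|/eqP hne]; first by rewrite orbT. rewrite orbF.
  have -> : e \in X by apply: (subsetP hsub); rewrite !inE hne he.
  case: (e =P z) => [ez|]; last by [].
  by move: hzE; rewrite -ez he.
have hlt : z < sx by rewrite ltn_neqAle; rewrite inIseg in hz; rewrite hz andbT; apply/eqP=> h; move/eqP: hzs; apply; apply: val_inj.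
have hzX' : z \notin X' by rewrite /X' !inE eqxx /= (negbTE hzs).
have hsxX' : sx \in X' by rewrite /X' !inE eqxx orbT.
have := hcomp hE0X' hlt hsxX' hzX'; rewrite /X'.
suff -> : (X :\ z :|: [set sx]) :\ sx :|: [set z] = X by [].
apply/setP=> e; rewrite !inE.
case: (e =P z) => [->|_]; first by rewrite hzX orbT.
case: (e =P sx) => [->|_] /=; by rewrite ?hsX ?orbF ?andbF.
Qed.

Lemma new_notF (E Y : {set 'I_n}) : E \in g -> sx \in E -> Y \subset H -> E :\ sx :|: Y \notin F.
Proof.
move=> hE hsx hY; apply/negP=> /inF_gen [_ [E0 hE0 hsub]].
have hE0s : E0 \subset E :\ sx.
  apply/subsetP=> e he.
  have : e \in E :\ sx :|: Y by apply: (subsetP hsub).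
  rewrite in_setU => /orP [] // hy.
  have := subsetP (hIs hE0) e he; have := subsetP hY e hy; by rewrite inE => /negbTE ->.
have hE0E : E0 \subset E by apply: (subset_trans hE0s); apply: subD1set.
have := hanti hE hE0 hE0E => eq; move: hE0s; rewrite eq => /subsetP /(_ sx hsx).
by rewrite !inE eqxx.
Qed.

Hypothesis hs : splusF g = s.

Definition Gs (i : nat) := [set E in g | (sx \in E) && (#|E| == i)].

Lemma lab_inj : injective (@lab n).
Proof. by move=> a b /= [] h; apply: val_inj. Qed.

Lemma memlab_sx (E : {set 'I_n}) : memlab s E = (sx \in E).
Proof.
apply/existsP/idP => [[x /andP [hx /eqP /lab_inj hxs]]|h]; first by rewrite -hxs.
by exists sx; rewrite h eqxx.
Qed.

Lemma gstarE i : gstar_i g i = Gs i.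
Proof. by apply/setP=> E; rewrite !inE hs memlab_sx. Qed.

Lemma labset : [set x : 'I_n | lab x == s] = [set sx].
Proof. apply/setP=> x; rewrite !inE; apply/eqP/eqP=> [/lab_inj|->] //. Qed.

Lemma gstar'E i : gstar_i' g i = [set E :\ sx | E in Gs i].
Proof. by rewrite /gstar_i' gstarE hs labset. Qed.

Lemma splus_ub (E : {set 'I_n}) x : x \in E -> lab x <= splus E.
Proof. move=> hx; rewrite /splus; exact: leq_bigmax_cond. Qed.

Lemma splus_le (E : {set 'I_n}) m : E \subset initseg n m -> splus E <= m.
Proof.
move=> hE; rewrite /splus; apply/bigmax_leqP=> x hx.
by have := subsetP hE x hx; rewrite inE.
Qed.

Lemma splus_G (E : {set 'I_n}) : E \in g -> sx \in E -> splus E = s.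
Proof.
move=> hE hsx; apply/eqP; rewrite eqn_leq splus_le ?hIs //=; exact: splus_ub.
Qed.

Lemma Gs_g i E : E \in Gs i -> [/\ E \in g, sx \in E & #|E| = i].
Proof. by rewrite inE => /andP [-> /andP [-> /eqP ->]]. Qed.

Lemma inR j (B : {set 'I_n}) : (B \in DsetF k (Gs j)) = (#|B| == k) && (B :&: Iseg \in Gs j).
Proof.
apply/bigcupP/andP => [[E hE]|[hB hT]].
  have [hEg hsx _] := Gs_g hE.
  rewrite inE => /andP [hB /eqP hT]; split=> //; by rewrite -(splus_G hEg hsx) hT.
exists (B :&: Iseg) => //; have [hEg hsx _] := Gs_g hT.
by rewrite inE hB /= (splus_G hEg hsx).
Qed.

Lemma inN i (E Y : {set 'I_n}) : E \in Gs i -> Y \subset H -> #|E :\ sx :|: Y| = k ->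
  E :\ sx :|: Y \in DsetF k (gstar_i' g i).
Proof.
move=> hE hY hk; apply/bigcupP; exists (E :\ sx); first by rewrite gstar'E; apply: imset_f.
have [hEg hsx _] := Gs_g hE.
rewrite inE hk eqxx /=; apply/eqP/setP=> y; rewrite in_setI in_setU.
case hy: (y \in E :\ sx) => /=.
  by rewrite inE; apply: splus_ub.
case hyY: (y \in Y) => //=; apply/negP; rewrite inE => hle.
have hsub : E :\ sx \subset Iseg by apply: subset_trans (hIs hEg); apply: subD1set.
have := leq_trans hle (splus_le hsub); have := subsetP hY y hyY; by rewrite inE inE => /negbTE ->.
Qed.

Definition PS u (X : {set {set 'I_n}}) := [set P : {set {set 'I_n}} | [exists A in X, exists B in X,
      [&& P == [set A; B], #|A| == u.+1, #|B| == u.+1 & #|A :&: B| == u]]].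

Lemma zetaE u X : zeta u X X = #|PS u X|.
Proof. by []. Qed.

Lemma PS_in u (X : {set {set 'I_n}}) (A B : {set 'I_n}) : A \in X -> B \in X -> #|A| = u.+1 -> #|B| = u.+1 ->
  #|A :&: B| = u -> [set A; B] \in PS u X.
Proof.
move=> hA hB h1 h2 h3; rewrite inE; apply/existsP; exists A; rewrite hA /=.
apply/existsP; exists B; by rewrite hB h1 h2 h3 !eqxx.
Qed.

Lemma PS_elim u (X : {set {set 'I_n}}) (P : {set {set 'I_n}}) : P \in PS u X -> exists A B, [/\ A \in X, B \in X, P = [set A; B],
   #|A| = u.+1 & (#|B| = u.+1 /\ #|A :&: B| = u)].
Proof.
rewrite inE => /existsP [A /andP [hA /existsP [B /andP [hB]]]].
case/and4P=> /eqP h1 /eqP h2 /eqP h3 /eqP h4; by exists A, B.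
Qed.

Lemma PS_mem u (X P : {set {set 'I_n}}) (A : {set 'I_n}) : P \in PS u X -> A \in P -> A \in X.
Proof.
case/PS_elim=> [B [C [hB hC -> _ _]]]; by rewrite !inE => /orP [] /eqP ->.
Qed.

Lemma PS_sub u (X Y : {set {set 'I_n}}) : X \subset Y -> PS u X \subset PS u Y.
Proof.
move=> hXY; apply/subsetP=> P /PS_elim [A [B [hA hB -> h1 [h2 h3]]]].
by apply: PS_in => //; apply: (subsetP hXY).
Qed.

Definition capP (P : {set {set 'I_n}}) := [set y | [forall A in P, y \in A]].
Definition cupP (P : {set {set 'I_n}}) := [set y | [exists A in P, y \in A]].

Lemma cap2 (A B : {set 'I_n}) : capP [set A; B] = A :&: B.
Proof.
apply/setP=> y; rewrite !inE; apply/forall_inP/andP => [h|[h1 h2] C].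
  by split; apply: h; rewrite !inE eqxx ?orbT.
by rewrite !inE => /orP [] /eqP ->.
Qed.
Lemma cup2 (A B : {set 'I_n}) : cupP [set A; B] = A :|: B.
Proof.
apply/setP=> y; rewrite !inE; apply/exists_inP/orP => [[C]|[h|h]].
  by rewrite !inE => /orP [] /eqP -> ->; [left|right].
  by exists A; rewrite ?inE ?eqxx.
by exists B; rewrite ?inE ?eqxx ?orbT.
Qed.

Lemma c0_inj (E1 E2 : {set 'I_n}) : sx \in E1 -> sx \in E2 -> E1 :\ sx = E2 :\ sx -> E1 = E2.
Proof. by move=> h1 h2 e; rewrite -(setD1K h1) -(setD1K h2) e. Qed.

Lemma imset2E (T1 T2 : finType) (f : T1 -> T2) (a b : T1) : [set f x | x in [set a; b]] = [set f a; f b].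
Proof. by rewrite imsetU1 imset_set1. Qed.

Lemma pair_sep (T : finType) (h : T -> nat) (A1 B1 A2 B2 : T) :
  [set A1; B1] = [set A2; B2] -> h A1 = h A2 -> h B1 = h B2 -> h A1 != h B1 -> A1 = A2 /\ B1 = B2.
Proof.
move=> e ha hb hne.
have : A1 \in [set A2; B2] by rewrite -e !inE eqxx.
have : B1 \in [set A2; B2] by rewrite -e !inE eqxx orbT.
rewrite !inE => /orP [/eqP eB|/eqP eB] /orP [/eqP eA|/eqP eA] //;
exfalso; move/negP: hne; apply; apply/eqP; first [by rewrite ha eB | by rewrite eA eB].
Qed.

Lemma swap_inj (A : {set 'I_n}) u1 v1 u2 v2 : u1 \in A -> u2 \in A -> v1 \notin A -> v2 \notin A ->
  A :\ u1 :|: [set v1] = A :\ u2 :|: [set v2] -> u1 = u2 /\ v1 = v2.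
Proof.
move=> hu1 hu2 hv1 hv2 e.
have hv : v1 = v2.
  have : v1 \in A :\ u2 :|: [set v2] by rewrite -e !inE eqxx orbT.
  rewrite !inE => /orP [/andP [_ h]|/eqP //]; by rewrite h in hv1.
split=> //; apply/eqP; apply/negPn/negP=> hne.
have : u1 \in A :\ u1 :|: [set v1] by rewrite e !inE hne hu1 /=.
rewrite !inE eqxx /= => /eqP h; by move: hv1; rewrite -h hu1.
Qed.

Lemma cardU1n (A : {set 'I_n}) (d : 'I_n) : d \notin A -> #|A :|: [set d]| = #|A|.+1.
Proof. by move=> h; rewrite setUC cardsU1 h. Qed.

Lemma cardswap (A : {set 'I_n}) u v : u \in A -> v \notin A -> #|A :\ u :|: [set v]| = #|A|.
Proof.
move=> hu hv; rewrite cardU1n; last by rewrite !inE negb_and hv orbT.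
by rewrite (cardsD1 u A) hu.
Qed.

Variables (i j : nat).
Hypothesis hgk : forall E, E \in g -> #|E| <= k.
Hypothesis hij : j != i.
Hypothesis hi1 : 0 < i.
Hypothesis hik : i <= k.

Local Notation R := (DsetF k (Gs j)).
Local Notation F1 := ((F :|: DsetF k (gstar_i' g i)) :\: DsetF k (Gs j)).
Local Notation F' := (F :\: DsetF k (Gs j)).

Lemma trace_notR (B : {set 'I_n}) : (sx \notin B :&: Iseg) || (#|B :&: Iseg| != j) -> B \notin R.
Proof.
move=> h; rewrite inR; apply/negP=> /andP [_]; rewrite !inE => /andP [_ /andP [h1 /eqP h2]].
by move: h; rewrite !inE h1 h2 eqxx.
Qed.

Lemma cardD1s' (E : {set 'I_n}) y : y \in E -> #|E :\ y| = #|E|.-1.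
Proof. by move=> h; rewrite (cardsD1 y E) h. Qed.

Lemma cardD1s (E : {set 'I_n}) : sx \in E -> #|E :\ sx| = #|E|.-1.
Proof. by move=> h; rewrite (cardsD1 sx E) h. Qed.

Lemma c0_sub (E : {set 'I_n}) : E \in g -> E :\ sx \subset Iseg.
Proof. move=> hE; apply: subset_trans (hIs hE); exact: subD1set. Qed.

Lemma newset (E Y : {set 'I_n}) : E \in Gs i -> Y \subset H -> #|Y| = k - i + 1 ->
  [/\ #|E :\ sx :|: Y| = k, E :\ sx :|: Y \notin F, E :\ sx :|: Y \in F1 &
      (E :\ sx :|: Y) :&: Iseg = E :\ sx].
Proof.
move=> hE hY hYc; have [hEg hsx hEc] := Gs_g hE.
have hc : #|E :\ sx :|: Y| = k.
  rewrite cardEY ?c0_sub // cardD1s // hEc hYc.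
  by move: hi1 hik; clear; lia.
have hnF := new_notF hEg hsx hY.
have htr : (E :\ sx :|: Y) :&: Iseg = E :\ sx by rewrite trI ?c0_sub.
split=> //.
rewrite in_setD in_setU (inN hE hY hc) orbT andbT.
by apply: trace_notR; rewrite htr !inE eqxx.
Qed.

Lemma oldset (B : {set 'I_n}) : B \in F -> B \notin R -> B \in F1.
Proof. by move=> h1 h2; rewrite in_setD in_setU h1 h2. Qed.

Lemma capU1 (K : {set 'I_n}) d1 d2 : d1 != d2 -> (K :|: [set d1]) :&: (K :|: [set d2]) = K.
Proof.
move=> hne; apply/setP=> y; rewrite !inE.
case: (y \in K) => //=; case: (y =P d1) => // ->; by rewrite (negbTE hne).
Qed.

Hypothesis hk : 0 < k.

Lemma DA_elim x : x \in DA (Gs i) (k - i) -> exists E Z d1 d2,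
  [/\ x = (E, (Z, [set d1; d2])), E \in Gs i, Z \subset H, #|Z| = k - i &
     [/\ d1 != d2, d1 \in H :\: Z & d2 \in H :\: Z]].
Proof.
case: x => E [Z D]; rewrite inE /= => /andP [hE /andP [/andP [hZ /eqP hZc] /andP [hD hDc]]].
case/cards2P: hDc => d1 [d2 [hne eD]].
exists E, Z, d1, d2; rewrite -eD; split=> //; split=> //; apply: (subsetP hD); by rewrite eD !inE eqxx ?orbT.
Qed.

Lemma gainA_mem (E Z : {set 'I_n}) (d : 'I_n) : E \in Gs i -> Z \subset H -> #|Z| = k - i -> d \in H :\: Z ->
  [/\ #|E :\ sx :|: Z :|: [set d]| = k, E :\ sx :|: Z :|: [set d] \notin F,
      E :\ sx :|: Z :|: [set d] \in F1 & (E :\ sx :|: Z :|: [set d]) :&: Iseg = E :\ sx].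
Proof.
move=> hE hZ hZc; rewrite inE => /andP [hdZ hdH].
rewrite -setUA; apply: newset => //.
  by rewrite subUset hZ sub1set hdH.
by rewrite cardU1n // hZc addn1.
Qed.

Lemma gainA x : x \in DA (Gs i) (k - i) ->
  [/\ fA (fun E => E :\ sx) x \in PS k.-1 F1, fA (fun E => E :\ sx) x \notin PS k.-1 F' &
     forall M, M \in fA (fun E => E :\ sx) x -> M :&: Iseg = x.1 :\ sx].
Proof.
case/DA_elim=> E [Z [d1 [d2 [-> hE hZ hZc [hne hd1 hd2]]]]].
rewrite /fA /= imset2E.
have [c1 n1 f1 t1] := gainA_mem hE hZ hZc hd1.
have [c2 n2 f2 t2] := gainA_mem hE hZ hZc hd2.
split.
- apply: PS_in => //; rewrite ?prednK //.
  rewrite capU1 // cardEY ?c0_sub //; last by have [] := Gs_g hE.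
  have [_ hsx hEc] := Gs_g hE; rewrite cardD1s // hEc hZc.
  by move: hi1 hik hk; clear; lia.
- apply/negP=> hP; have := PS_mem hP (set21 _ _).
  by rewrite in_setD (negbTE n1) andbF.
- by move=> M; rewrite !inE => /orP [] /eqP ->.
Qed.

Lemma cupD (K : {set 'I_n}) d1 d2 : d1 \notin K -> d2 \notin K ->
  ((K :|: [set d1]) :|: (K :|: [set d2])) :\: K = [set d1; d2].
Proof.
move=> h1 h2; apply/setP=> y; rewrite !inE.
case hy: (y \in K) => /=; last by [].
apply/esym/negbTE; apply/orP=> [[]] /eqP e; [move: h1|move: h2]; by rewrite -e hy.
Qed.

Lemma notinK (E Z : {set 'I_n}) d : E \in g -> d \in H :\: Z -> d \notin E :\ sx :|: Z.
Proof.
move=> hE; rewrite in_setD => /andP [hdZ hdH]; rewrite in_setU negb_or hdZ andbT.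
apply/negP=> h; have := subsetP (c0_sub hE) d h; by move: hdH; rewrite inE => /negbTE ->.
Qed.

Lemma injA : {in DA (Gs i) (k - i) &, injective (fA (fun E => E :\ sx))}.
Proof.
move=> x1 x2 /DA_elim [E1 [Z1 [a1 [b1 [-> hE1 hZ1 _ [hne1 ha1 hb1]]]]]].
move=> /DA_elim [E2 [Z2 [a2 [b2 [-> hE2 hZ2 _ [hne2 ha2 hb2]]]]]].
rewrite /fA /= !imset2E => e.
have [hE1g hsx1 _] := Gs_g hE1; have [hE2g hsx2 _] := Gs_g hE2.
have eK : E1 :\ sx :|: Z1 = E2 :\ sx :|: Z2.
  by move: (congr1 capP e); rewrite !cap2 !capU1.
have eD : [set a1; b1] = [set a2; b2].
  move: (congr1 cupP e); rewrite !cup2 => e2.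
  rewrite -(cupD (notinK hE1g ha1) (notinK hE1g hb1)) e2 eK.
  by rewrite (cupD (notinK hE2g ha2) (notinK hE2g hb2)).
have eE : E1 = E2.
  apply: c0_inj => //; by rewrite -(trI (c0_sub hE1g) hZ1) -(trI (c0_sub hE2g) hZ2) eK.
have eZ : Z1 = Z2 by rewrite -(trH (c0_sub hE1g) hZ1) -(trH (c0_sub hE2g) hZ2) eK.
by rewrite eE eZ eD.
Qed.

Lemma DB_elim (G : {set {set 'I_n}}) q (U : {set 'I_n} -> {set 'I_n} -> {set 'I_n})
  (V : {set 'I_n} -> {set 'I_n}) x : x \in DB G q U V -> exists E Y u v,
  [/\ x = ((E, Y), (u, v)), E \in G, Y \subset H, #|Y| = q & u \in U E Y /\ v \in V E].
Proof.
case: x => [[E Y] [u v]]; rewrite inE /= => /andP [/andP [hE /andP [hY /eqP hq]] /andP [hu hv]].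
by exists E, Y, u, v.
Qed.

Lemma capswap (A : {set 'I_n}) u v : v \notin A -> A :&: (A :\ u :|: [set v]) = A :\ u.
Proof.
move=> hv; apply/setP=> y; rewrite !inE.
case: (y =P v) => [->|_]; first by rewrite (negbTE hv) andbF.
by rewrite orbF; case: (y \in A); rewrite ?andbT ?andbF.
Qed.

Lemma inIsegH y : y \in Iseg -> y \in H -> False.
Proof. by move=> h1; rewrite in_setC h1. Qed.

Lemma setD1_notin (A : {set 'I_n}) a : a \notin A -> A :\ a = A.
Proof.
move=> h; apply/setP=> y; rewrite in_setD1; case: (y =P a) => [->|_] //=; by rewrite (negbTE h).
Qed.

Lemma traceB (E Y : {set 'I_n}) u v : E \in g -> Y \subset H -> u \in Y -> v \in Iseg ->
  ((E :\ sx :|: Y) :\ u :|: [set v]) :&: Iseg = E :\ sx :|: [set v].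
Proof.
move=> hE hY hu hv.
rewrite setIUl setIDAC trI ?c0_sub // (setIidPl _) ?sub1set // setD1_notin //.
apply/negP=> h; apply: (inIsegH (subsetP (c0_sub hE) u h)); exact: subsetP hY u hu.
Qed.

Lemma gainB x : x \in DB (Gs i) (k - i + 1) (fun E Y => Y) (fun E => Iseg :\: (E :\ sx)) ->
  [/\ fB (fun E => E :\ sx) x \in PS k.-1 F1, fB (fun E => E :\ sx) x \notin PS k.-1 F',
     #|(x.1.1 :\ sx :|: x.1.2) :&: Iseg| = i.-1 &
     #|((x.1.1 :\ sx :|: x.1.2) :\ x.2.1 :|: [set x.2.2]) :&: Iseg| = i].
Proof.
case/DB_elim=> E [Y [u [v [-> hE hY hYc [hu hv]]]]].
rewrite /fB /=.
have [cA nA fA' tA] := newset hE hY hYc.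
have [hEg hsx hEc] := Gs_g hE.
move: hv; rewrite in_setD => /andP [hvE hvI].
have huA : u \in E :\ sx :|: Y by rewrite in_setU hu orbT.
have hvA : v \notin E :\ sx :|: Y.
  rewrite in_setU negb_or hvE /=; apply/negP=> h; exact: inIsegH hvI (subsetP hY v h).
set A := E :\ sx :|: Y in cA nA fA' tA huA hvA *.
set B := A :\ u :|: [set v].
have cB : #|B| = k by rewrite /B cardswap.
have tB : B :&: Iseg = E :\ sx :|: [set v] by rewrite /B /A traceB.
have ctB : #|B :&: Iseg| = i.
  by rewrite tB cardU1n // cardD1s // hEc; move: hi1; clear; lia.
have hEvB : E :\ sx :|: [set v] \subset B by rewrite -tB subsetIl.
have BF : B \in F.
  case: (v =P sx) => [evs|/eqP hvs].
    apply: (inF_sup hEg) => //; apply: subset_trans hEvB.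
    by rewrite evs setUC (setD1K hsx).
  apply: (gen_shift hEg hsx hvI hvs) => //.
  by apply/negP=> h; move: hvE; rewrite in_setD1 h hvs.
have BnR : B \notin R by apply: trace_notR; rewrite ctB eq_sym hij orbT.
split.
- apply: PS_in.
  + exact: fA'.
  + exact: oldset BF BnR.
  + by rewrite prednK.
  + by rewrite prednK.
  + by rewrite capswap //; move: cA; rewrite (cardsD1 u A) huA add1n => <-.
- apply/negP=> hP; have := PS_mem hP (set21 _ _).
  by rewrite in_setD (negbTE nA) andbF.
- by rewrite tA cardD1s // hEc.
- exact: ctB.
Qed.

Lemma injB : {in DB (Gs i) (k - i + 1) (fun E Y => Y) (fun E => Iseg :\: (E :\ sx)) &,
   injective (fB (fun E => E :\ sx))}.
Proof.
move=> x1 x2 h1 h2.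
have [_ _ ta1 tb1] := gainB h1; have [_ _ ta2 tb2] := gainB h2.
move: h1 h2 ta1 tb1 ta2 tb2.
move=> /DB_elim [E1 [Y1 [u1 [v1 [-> hE1 hY1 _ [hu1 hv1]]]]]].
move=> /DB_elim [E2 [Y2 [u2 [v2 [-> hE2 hY2 _ [hu2 hv2]]]]]] /= ta1 tb1 ta2 tb2.
rewrite /fB /= => e.
have hne : #|(E1 :\ sx :|: Y1) :&: Iseg| != #|((E1 :\ sx :|: Y1) :\ u1 :|: [set v1]) :&: Iseg|.
  rewrite ta1 tb1; apply/eqP; move: hi1; lia.
have [eA eB] := pair_sep (h := fun M : {set 'I_n} => #|M :&: Iseg|) e (etrans ta1 (esym ta2)) (etrans tb1 (esym tb2)) hne.
have [hE1g hsx1 _] := Gs_g hE1; have [hE2g hsx2 _] := Gs_g hE2.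
have eE : E1 = E2.
  apply: c0_inj => //; by rewrite -(trI (c0_sub hE1g) hY1) -(trI (c0_sub hE2g) hY2) eA.
have eY : Y1 = Y2 by rewrite -(trH (c0_sub hE1g) hY1) -(trH (c0_sub hE2g) hY2) eA.
subst E2 Y2.
have hvA (v : 'I_n) : v \in Iseg :\: (E1 :\ sx) -> v \notin E1 :\ sx :|: Y1.
  rewrite in_setD => /andP [hvE hvI]; rewrite in_setU negb_or hvE /=.
  apply/negP=> h; exact: inIsegH hvI (subsetP hY1 v h).
have [eu ev] : u1 = u2 /\ v1 = v2.
  apply: (swap_inj (A := E1 :\ sx :|: Y1)).
  - by rewrite in_setU hu1 orbT.
  - by rewrite in_setU hu2 orbT.
  - exact: hvA.
  - exact: hvA.
  - exact: eB.
by rewrite eu ev.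
Qed.

Definition Zv u (G : {set {set 'I_n}}) := [set P : {set {set 'I_n}} | [exists A in G, exists B in restr F s,
      [&& P == [set A; B], #|A| == u.+1, #|B| == u.+1, #|A :&: B| == u
        & memlab s (A :&: B)]]].

Lemma zetavE u G : zetav u s G (restr F s) = #|Zv u G|.
Proof. by []. Qed.

Lemma Zv_elim u (G : {set {set 'I_n}}) P : P \in Zv u G -> exists E E2 A0,
  [/\ P = [set E; E2], E \in G, A0 \in F, E2 = A0 :&: Iseg &
    [/\ #|E| = u.+1, #|E2| = u.+1, #|E :&: E2| = u & sx \in E :&: E2]].
Proof.
rewrite inE => /existsP [E /andP [hE /existsP [E2 /andP [hE2]]]].
case/and5P=> /eqP e1 /eqP e2 /eqP e3 /eqP e4; rewrite memlab_sx => h5.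
move: hE2 => /imsetP [A0 hA0 e6].
by exists E, E2, A0.
Qed.

Lemma secondC (E2 Y : {set 'I_n}) A0 : A0 \in F -> E2 = A0 :&: Iseg -> sx \in E2 -> #|E2| = i ->
  Y \subset H -> #|E2 :\ sx :|: Y| = k -> E2 :\ sx :|: Y \in F :|: DsetF k (gstar_i' g i).
Proof.
move=> hA0 e2 hsx hc hY hk'.
have [_ [E0 hE0 hsub]] := inF_gen hA0.
have hE0E2 : E0 \subset E2 by rewrite e2 subsetI hsub hIs.
have hsubM : E2 :\ sx \subset E2 :\ sx :|: Y by apply: subsetUl.
case: (E0 =P E2) => [eE|/eqP neE].
  apply/setUP; right; apply: inN => //.
  by rewrite inE -eE hE0 /= eE hsx hc eqxx.
apply/setUP; left.
have [z hzE2 hzE0] : exists2 z, z \in E2 & z \notin E0.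
  apply/subsetPn; apply/negP=> h; move/negP: neE; apply; by rewrite eqEsubset hE0E2 h.
have hzI : z \in Iseg by rewrite e2 in hzE2; move: hzE2; rewrite in_setI => /andP [].
case hsx0: (sx \in E0).
  have hzs : z != sx by apply/eqP=> e; move: hzE0; rewrite e hsx0.
  apply: (gen_shift hE0 hsx0 hzI hzs hzE0 hk').
  apply: subset_trans hsubM; apply/subsetP=> y; rewrite !inE => /orP [/andP [hy1 hy2]|/eqP ->].
    by rewrite hy1 (subsetP hE0E2 y hy2).
  by rewrite hzs hzE2.
apply: (inF_sup hE0 _ hk'); apply: subset_trans hsubM; apply/subsetP=> y hy.
rewrite in_setD1 (subsetP hE0E2 y hy) andbT; apply/eqP=> e; by move: hsx0; rewrite -e hy.
Qed.

Lemma gainC x : x \in DC (Zv i.-1 (Gs i)) (k - i + 1) ->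
  [/\ fC (fun E => E :\ sx) x \in PS k.-1 F1, fC (fun E => E :\ sx) x \notin PS k.-1 F',
     (forall M, M \in fC (fun E => E :\ sx) x -> #|M :&: Iseg| = i.-1) &
     exists M1 M2, [/\ M1 \in fC (fun E => E :\ sx) x, M2 \in fC (fun E => E :\ sx) x &
        M1 :&: Iseg != M2 :&: Iseg]].
Proof.
case: x => P Y; rewrite in_setX /= => /andP [hP]; rewrite inE => /andP [hY /eqP hYc].
have [E [E2 [A0 [-> hE hA0 e2 [c1 c2 c3 hsx]]]]] := Zv_elim hP.
rewrite /fC /= imset2E.
have [hEg hsxE hEc] := Gs_g hE.
move: hsx; rewrite in_setI => /andP [_ hsx2].
rewrite prednK // in c1 c2.
have hE2I : E2 \subset Iseg by rewrite e2 subsetIr.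
have hc0E2 : E2 :\ sx \subset Iseg by apply: subset_trans hE2I; apply: subD1set.
have [cA nA fA' tA] := newset hE hY hYc.
have cB : #|E2 :\ sx :|: Y| = k.
  by rewrite cardEY // cardD1s // c2 hYc; move: hi1 hik; clear; lia.
have tB : (E2 :\ sx :|: Y) :&: Iseg = E2 :\ sx by rewrite trI.
have fB' : E2 :\ sx :|: Y \in F1.
  rewrite in_setD (secondC hA0 e2 hsx2 c2 hY cB) andbT.
  by apply: trace_notR; rewrite tB !inE eqxx.
have hi2 : 1 < i.
  have : 0 < #|E :&: E2| by apply/card_gt0P; exists sx; rewrite in_setI hsxE.
  by rewrite c3; move: hi1; clear; lia.
split.
- apply: PS_in; rewrite ?prednK //.
  rewrite -setUIl -setDIl cardEY //; last first.
    by apply: subset_trans hc0E2; apply: setSD; apply: subsetIr.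
  rewrite cardD1s ?c3 ?hYc; last by rewrite in_setI hsxE.
  by move: hi2 hik; clear; lia.
- apply/negP=> hP'; have := PS_mem hP' (set21 _ _).
  by rewrite in_setD (negbTE nA) andbF.
- move=> M; rewrite !inE => /orP [] /eqP ->.
    by rewrite tA cardD1s // hEc.
  by rewrite tB cardD1s // c2.
- exists (E :\ sx :|: Y), (E2 :\ sx :|: Y); rewrite !inE !eqxx ?orbT; split=> //.
  rewrite tA tB; apply/eqP=> e.
  have eE : E = E2 by apply: c0_inj.
  by move: c3; rewrite -eE setIid hEc; move: hi1; clear; lia.
Qed.

Lemma Zv_mem u (G : {set {set 'I_n}}) P X : (forall E, E \in G -> E \in g) ->
  P \in Zv u G -> X \in P -> X \subset Iseg /\ sx \in X.
Proof.
move=> hG /Zv_elim [E [E2 [A0 [-> hE hA0 e2 [_ _ _ hsx]]]]].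
move: hsx; rewrite in_setI => /andP [h1 h2].
by rewrite !inE => /orP [] /eqP ->; split=> //; [apply: hIs; apply: hG| rewrite e2 subsetIr].
Qed.

Lemma imC_sub (P1 P2 : {set {set 'I_n}}) (Y : {set 'I_n}) : Y \subset H ->
  (forall X, X \in P1 -> X \subset Iseg /\ sx \in X) ->
  (forall X, X \in P2 -> X \subset Iseg /\ sx \in X) ->
  [set X :\ sx :|: Y | X in P1] = [set X :\ sx :|: Y | X in P2] -> P1 \subset P2.
Proof.
move=> hY h1 h2 e; apply/subsetP=> X hX.
have : X :\ sx :|: Y \in [set X :\ sx :|: Y | X in P2] by rewrite -e; apply: imset_f.
case/imsetP=> X' hX' e'.
have [hXI hXs] := h1 X hX; have [hX'I hX's] := h2 X' hX'.
have hc : X :\ sx \subset Iseg by apply: subset_trans hXI; apply: subD1set.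
have hc' : X' :\ sx \subset Iseg by apply: subset_trans hX'I; apply: subD1set.
suff -> : X = X' by [].
by apply: c0_inj => //; rewrite -(trI hc hY) -(trI hc' hY) e'.
Qed.

Lemma Gs_sub_g i' : forall E, E \in Gs i' -> E \in g.
Proof. by move=> E; case/Gs_g. Qed.

Lemma injC : {in DC (Zv i.-1 (Gs i)) (k - i + 1) &, injective (fC (fun E => E :\ sx))}.
Proof.
move=> [P1 Y1] [P2 Y2]; rewrite !in_setX /= => /andP [hP1 hY1] /andP [hP2 hY2].
move: hY1 hY2; rewrite !inE => /andP [hY1 _] /andP [hY2 _].
rewrite /fC /= => e.
have hm1 := Zv_mem (@Gs_sub_g i) hP1; have hm2 := Zv_mem (@Gs_sub_g i) hP2.
have [E [E2 [A0 [eP1 _ _ _ _]]]] := Zv_elim hP1.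
have hE : E \in P1 by rewrite eP1 set21.
have eY : Y1 = Y2.
  have : E :\ sx :|: Y1 \in [set X :\ sx :|: Y2 | X in P2] by rewrite -e; apply: imset_f.
  case/imsetP=> X' hX' e'.
  have [hEI _] := hm1 E hE; have [hX'I _] := hm2 X' hX'.
  have hc : E :\ sx \subset Iseg by apply: subset_trans hEI; apply: subD1set.
  have hc' : X' :\ sx \subset Iseg by apply: subset_trans hX'I; apply: subD1set.
  by rewrite -(trH hc hY1) -(trH hc' hY2) e'.
subst Y2.
have s12 := imC_sub hY1 hm1 hm2 e.
have s21 := imC_sub hY1 hm2 hm1 (esym e).
have -> : P1 = P2 by apply/eqP; rewrite eqEsubset s12 s21.
by [].
Qed.

Local Notation DAi := (DA (Gs i) (k - i)).
Local Notation DBi := (DB (Gs i) (k - i + 1) (fun E Y => Y) (fun E => Iseg :\: (E :\ sx))).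
Local Notation DCi := (DC (Zv i.-1 (Gs i)) (k - i + 1)).

Lemma gain_total : #|DAi| + #|DBi| + #|DCi| <= #|PS k.-1 F1 :\: PS k.-1 F'|.
Proof.
set IA := [set fA (fun E => E :\ sx) x | x in DAi].
set IB := [set fB (fun E => E :\ sx) x | x in DBi].
set IC := [set fC (fun E => E :\ sx) x | x in DCi].
have cA : #|IA| = #|DAi| by apply: card_in_imset; apply: injA.
have cB : #|IB| = #|DBi| by apply: card_in_imset; apply: injB.
have cC : #|IC| = #|DCi| by apply: card_in_imset; apply: injC.
have dAB : IA :&: IB = set0.
  apply/setP=> Q; rewrite !inE; apply/negP=> /andP [/imsetP [x hx ->] /imsetP [y hy e]].
  have [_ _ tA] := gainA hx; have [_ _ _ tB] := gainB hy.
  have hm : ((y.1.1 :\ sx :|: y.1.2) :\ y.2.1 :|: [set y.2.2]) \in fA (fun E => E :\ sx) x.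
    by rewrite e /fB set22.
  have := tA _ hm.
  case/DA_elim: hx => E [Z [d1 [d2 [-> hE _ _ _]]]] /= et.
  have [_ hsx hEc] := Gs_g hE.
  by move: tB; rewrite et cardD1s // hEc; move: hi1; clear; lia.
have dBC : IB :&: IC = set0.
  apply/setP=> Q; rewrite !inE; apply/negP=> /andP [/imsetP [x hx ->] /imsetP [y hy e]].
  have [_ _ _ tB] := gainB hx; have [_ _ tC _] := gainC hy.
  have hm : ((x.1.1 :\ sx :|: x.1.2) :\ x.2.1 :|: [set x.2.2]) \in fC (fun E => E :\ sx) y.
    by rewrite -e /fB set22.
  have := tC _ hm.
  by rewrite tB; move: hi1; clear; lia.
have dAC : IA :&: IC = set0.
  apply/setP=> Q; rewrite !inE; apply/negP=> /andP [/imsetP [x hx ->] /imsetP [y hy e]].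
  have [_ _ tA] := gainA hx; have [_ _ _ [M1 [M2 [h1 h2 hne]]]] := gainC hy.
  rewrite -e in h1 h2.
  by move: hne; rewrite (tA _ h1) (tA _ h2) eqxx.
have sub : IA :|: IB :|: IC \subset PS k.-1 F1 :\: PS k.-1 F'.
  apply/subsetP=> Q; rewrite !in_setU => /orP [/orP [] |] /imsetP [x hx ->]; rewrite in_setD.
  - by have [h1 h2 _] := gainA hx; rewrite h1 h2.
  - by have [h1 h2 _ _] := gainB hx; rewrite h1 h2.
  - by have [h1 h2 _ _] := gainC hx; rewrite h1 h2.
have := subset_leq_card sub.
rewrite cardsU_disj; last by rewrite setIUl dAC dBC setU0.
by rewrite cardsU_disj // cA cB cC.
Qed.

Lemma adj_elim (A B : {set 'I_n}) : #|A| = k -> #|B| = k -> #|A :&: B| = k.-1 ->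
  exists u v, [/\ u \in A, u \notin B, v \in B, v \notin A & B = A :\ u :|: [set v]].
Proof.
move=> hA hB hAB.
have c1 : #|A :\: B| == 1 by rewrite cardsD hA hAB; apply/eqP; move: hk; clear; lia.
have c2 : #|B :\: A| == 1 by rewrite cardsD hB setIC hAB; apply/eqP; move: hk; clear; lia.
case/cards1P: c1 => u eu; case/cards1P: c2 => v ev.
have hu : u \in A :\: B by rewrite eu set11.
have hv : v \in B :\: A by rewrite ev set11.
move: (hu) (hv); rewrite !in_setD => /andP [huB huA] /andP [hvA hvB].
exists u, v; split=> //.
apply/setP=> y; rewrite in_setU in_setD1 in_set1.
case hyA: (y \in A); case hyB: (y \in B) => /=.
- by case: (y =P u) => [e|] //; move: huB; rewrite -e hyB.
- have : y \in A :\: B by rewrite in_setD hyA hyB.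
  rewrite eu in_set1 => ->; rewrite /=; apply/esym/eqP=> e; by move: hvA; rewrite -e hyA.
- have : y \in B :\: A by rewrite in_setD hyA hyB.
  by rewrite ev in_set1 andbF => ->.
- rewrite andbF /=; apply/esym/eqP=> e; by move: hvB; rewrite -e hyB.
Qed.

Lemma decomp (A : {set 'I_n}) : A = (A :&: Iseg) :|: (A :&: H).
Proof. by rewrite -setIUr setUCr setIT. Qed.

Local Notation DAj := (DA (Gs j) (k - j - 1)).
Local Notation DBj := (DB (Gs j) (k - j) (fun E X => X :|: [set sx]) (fun E => Iseg :\: E)).
Local Notation DCj := (DC (Zv j.-1 (Gs j)) (k - j)).
Local Notation LA := [set fA (fun E => E) x | x in DAj].
Local Notation LB := [set fB (fun E => E) x | x in DBj].
Local Notation LC := [set fC (fun E => E) x | x in DCj].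

Lemma cover1 (A B : {set 'I_n}) : A \in R -> B \in F -> #|A| = k -> #|B| = k -> #|A :&: B| = k.-1 ->
  (j < k /\ [set A; B] \in LA) \/ [set A; B] \in LB \/ [set A; B] \in LC.
Proof.
move=> hAR hBF hA hB hAB.
move: hAR; rewrite inR => /andP [_ hEj].
have eA := decomp A.
set E := A :&: Iseg in hEj eA; set X := A :&: H in eA.
have [hEg hsx hEc] := Gs_g hEj.
have hEI : E \subset Iseg by apply: subsetIr.
have hXH : X \subset H by apply: subsetIr.
have hXc : #|X| = k - j by move: hA; rewrite eA cardEY // hEc => <-; rewrite addKn.
have [u [v [huA huB hvB hvA eB]]] := adj_elim hA hB hAB.
have hvE : v \notin E by rewrite in_setI (negbTE hvA).
have LBcase : u \in X :|: [set sx] -> v \in Iseg -> [set A; B] \in LB.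
  move=> hu hv; apply/imsetP; exists ((E, X), (u, v)).
    by rewrite inE /= hEj hXH hXc eqxx hu in_setD hvE hv.
  by rewrite /fB /= -eA -eB.
case huI: (u \in Iseg).
- have huE : u \in E by rewrite in_setI huA huI.
  case hvI: (v \in Iseg); last first.
    exfalso.
    have [_ [E0 hE0 hsub]] := inF_gen hBF.
    have hsubE : E0 \subset E :\ u.
      apply/subsetP=> y hy.
      have hyB := subsetP hsub y hy; have hyI := subsetP (hIs hE0) y hy.
      move: hyB; rewrite eB in_setU in_set1 in_setD1 => /orP [/andP [hyu hyA]|/eqP eyv].
        by rewrite in_setD1 hyu in_setI hyA hyI.
      by move: hvI; rewrite -eyv hyI.
    have e0 : E0 = E by apply: (hanti hEg hE0); exact: (subset_trans hsubE (subD1set _ _)).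
    by move: hsubE; rewrite e0 => /subsetP /(_ u huE); rewrite in_setD1 eqxx.
  case: (u =P sx) => [eus|/eqP hus].
    by right; left; apply: LBcase => //; rewrite eus in_setU set11 orbT.
  right; right.
  have tB : B :&: Iseg = E :\ u :|: [set v].
    apply/setP=> y; rewrite eB !in_setI !in_setU !in_setD1 !in_set1 in_setI.
    case: (y =P v) => [->|_]; first by rewrite hvI !orbT andbT.
    by rewrite !orbF andbA.
  have hBH : B :&: H = X.
    apply/setP=> y; rewrite eB !in_setI !in_setU !in_setD1 !in_set1.
    case hyH: (y \in H); rewrite ?andbF ?andbT //.
    have hyI : y \in Iseg = false by move: hyH; rewrite in_setC => /negbTE.
    have hyu : y != u by apply/eqP=> e; move: hyI; rewrite e huI.
    have hyv : y != v by apply/eqP=> e; move: hyI; rewrite e hvI.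
    by rewrite hyu (negbTE hyv) orbF.
  have hj1 : 0 < j by rewrite -hEc; apply/card_gt0P; exists sx.
  apply/imsetP; exists ([set E; B :&: Iseg], X).
    rewrite in_setX; apply/andP; split; last by rewrite inE hXH hXc eqxx.
    rewrite inE; apply/existsP; exists E; rewrite hEj /=; apply/existsP; exists (B :&: Iseg).
    rewrite (imset_f (fun A => A :&: initseg n s) hBF) /= eqxx /=.
    rewrite prednK // hEc eqxx tB (cardswap huE hvE) hEc eqxx /= capswap // (cardD1s' huE) hEc eqxx /= memlab_sx.
    by rewrite in_setD1 hsx andbT eq_sym.
  rewrite /fC /= imset2E.
  by rewrite -eA -hBH -decomp.
- have huX : u \in X by rewrite in_setI huA in_setC huI.
  case hvI: (v \in Iseg).
    by right; left; apply: LBcase => //; rewrite in_setU huX.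
  left; split.
    have : 0 < #|X| by apply/card_gt0P; exists u.
    by rewrite hXc; move: hik; clear; lia.
  apply/imsetP; exists (E, (X :\ u, [set u; v])).
    have huv : u != v by apply/eqP=> e; move: hvA; rewrite -e huA.
    have hvH : v \in H by rewrite in_setC hvI.
    rewrite inE /= hEj /= cards2 huv eqxx andbT.
    apply/andP; split; [apply/andP; split|].
    + by apply: subset_trans hXH; apply: subD1set.
    + by rewrite (cardD1s' huX) hXc subn1.
    + apply/subsetP=> y; rewrite !in_setU !in_set1 => /orP [] /eqP ->; rewrite in_setD ?in_setD1.
        by rewrite eqxx /= (subsetP hXH u huX).
      rewrite hvH andbT negb_and; apply/orP; right; by rewrite in_setI (negbTE hvA).
  rewrite /fA /= imset2E.
  have huE : u \notin E by rewrite in_setI huI andbF.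
  have eAu : E :|: X :\ u = A :\ u by rewrite [in RHS]eA setDUl (setD1_notin huE).
  rewrite eAu eB; congr [set _; _].
  by rewrite setUC setD1K.
Qed.

Lemma cardU_le (T : finType) (A B : {set T}) : #|A :|: B| <= #|A| + #|B|.
Proof. by rewrite cardsU leq_subr. Qed.

Lemma loss_total : #|PS k.-1 F :\: PS k.-1 F'| <= (if j < k then #|DAj| else 0) + #|DBj| + #|DCj|.
Proof.
set LA' := if j < k then LA else set0.
have sub : PS k.-1 F :\: PS k.-1 F' \subset LA' :|: LB :|: LC.
  apply/subsetP=> P; rewrite in_setD => /andP [hnP hP].
  have [A [B [hA hB eP cA [cB cAB]]]] := PS_elim hP.
  rewrite prednK // in cA cB.
  have key : forall A B : {set 'I_n}, A \in R -> B \in F -> #|A| = k -> #|B| = k ->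
      #|A :&: B| = k.-1 -> [set A; B] \in LA' :|: LB :|: LC.
    move=> A' B' h1 h2 h3 h4 h5; case: (cover1 h1 h2 h3 h4 h5) => [[hj h]|[h|h]].
    + by rewrite /LA' hj !in_setU h.
    + by rewrite !in_setU h orbT.
    + by rewrite !in_setU h orbT.
  case hAR: (A \in R); first by rewrite eP; apply: key.
  case hBR: (B \in R).
    by rewrite eP setUC; apply: key => //; rewrite setIC.
  exfalso; move/negP: hnP; apply; rewrite eP; apply: PS_in; rewrite ?prednK //.
  - by rewrite in_setD hAR hA.
  - by rewrite in_setD hBR hB.
have := subset_leq_card sub => h; apply: (leq_trans h).
apply: leq_trans (cardU_le _ _) _; apply: leq_add; last exact: leq_imset_card.
apply: leq_trans (cardU_le _ _) _; apply: leq_add; last exact: leq_imset_card.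
rewrite /LA'; case: (j < k); last by rewrite cards0.
exact: leq_imset_card.
Qed.

Lemma main_ineq :
  ((#|DAi| + #|DBi| + #|DCi|)%N%:Z - ((if (j < k)%N then #|DAj| else 0) + #|DBj| + #|DCj|)%N%:Z <=
   (zeta k.-1 F1 F1)%:Z - (zeta k.-1 F F)%:Z)%R.
Proof.
rewrite !zetaE.
have s1 : PS k.-1 F' \subset PS k.-1 F1.
  apply: PS_sub; apply/subsetP=> A; rewrite !in_setD in_setU => /andP [-> ->] //.
have s2 : PS k.-1 F' \subset PS k.-1 F by apply: PS_sub; apply: subsetDl.
have e1 : #|PS k.-1 F1| = #|PS k.-1 F'| + #|PS k.-1 F1 :\: PS k.-1 F'|.
  by rewrite cardsD (setIidPr s1) subnKC // subset_leq_card.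
have e2 : #|PS k.-1 F| = #|PS k.-1 F'| + #|PS k.-1 F :\: PS k.-1 F'|.
  by rewrite cardsD (setIidPr s2) subnKC // subset_leq_card.
rewrite e1 e2.
have g1 := gain_total; have l1 := loss_total.
move: g1 l1.
set a := #|PS k.-1 F'|; set x := #|PS k.-1 F1 :\: PS k.-1 F'|; set y := #|PS k.-1 F :\: PS k.-1 F'|.
set G1 := #|DAi| + #|DBi| + #|DCi|.
set L1 := (if (j < k)%N then #|DAj| else 0) + #|DBj| + #|DCj|.
clear; lia.
Qed.

Lemma final_ineq :
  ((zeta k.-1 F1 F1)%:Z - (zeta k.-1 F F)%:Z >=
      (#|Gs i| * 'C(n - s, k - i) * 'C(n - s + i - k, 2))%N%:Z
    + (zetav i.-1 s (Gs i) (restr F s) * 'C(n - s, k - i + 1))%N%:Z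
    + (#|Gs i| * (s - i + 1) * (k - i + 1) * 'C(n - s, k - i + 1))%N%:Z
    - (#|Gs j| * binz (n - s) (k%:Z - j%:Z - 1) * 'C(n - s + j + 1 - k, 2))%N%:Z
    - (zetav j.-1 s (Gs j) (restr F s) * binz (n - s) (k%:Z - j%:Z))%N%:Z
    - (#|Gs j|%:Z * (s%:Z - j%:Z) * (k%:Z - j%:Z + 1)
         * (binz (n - s) (k%:Z - j%:Z))%:Z))%R.
Proof.
apply: le_trans main_ineq.
rewrite !zetavE.
have eA : #|DAi| = (#|Gs i| * 'C(n - s, k - i) * 'C(n - s + i - k, 2))%N.
  rewrite card_DA mulnA; case: (leqP (k - i) (n - s)) => h.
    by congr (_ * 'C(_, _)); move: h hik; clear; lia.
  by rewrite bin_small // !muln0 mul0n.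
have eB : #|DBi| = (#|Gs i| * (s - i + 1) * (k - i + 1) * 'C(n - s, k - i + 1))%N.
  rewrite (@card_DB _ _ _ _ (k - i + 1) (s - i + 1)).
  - by clear; lia.
  - by move=> E Y _ _ ->.
  - move=> E hE; have [hEg hsx hEc] := Gs_g hE.
    rewrite cardsD (setIidPr (c0_sub hEg)) card_Iseg cardD1s // hEc.
    have : #|E| <= s by rewrite -card_Iseg; apply: subset_leq_card; apply: hIs.
    by rewrite hEc; move: hi1; clear; lia.
have eC : #|DCi| = (#|Zv i.-1 (Gs i)| * 'C(n - s, k - i + 1))%N by rewrite card_DC.
rewrite eA eB eC.
set T1 := (#|Gs i| * _ * _)%N.
set T2 := (#|Zv i.-1 (Gs i)| * _)%N.
set T3 := (#|Gs i| * _ * _ * _)%N.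
suff hL : (((if (j < k)%N then #|DAj| else 0) + #|DBj| + #|DCj|)%N%:Z <=
    (#|Gs j| * binz (n - s) (k%:Z - j%:Z - 1) * 'C(n - s + j + 1 - k, 2))%N%:Z
    + (#|Zv j.-1 (Gs j)| * binz (n - s) (k%:Z - j%:Z))%N%:Z
    + (#|Gs j|%:Z * (s%:Z - j%:Z) * (k%:Z - j%:Z + 1) * (binz (n - s) (k%:Z - j%:Z))%:Z))%R.
  move: hL; clear; lia.
case: (set_0Vmem (Gs j)) => [e0|[E hE]].
  have z0 : Zv j.-1 (Gs j) = set0.
    apply/setP=> P; rewrite inE in_set0; apply/existsP=> [[A]]; by rewrite e0 in_set0.
  rewrite card_DA card_DC z0 e0 !cards0 !mul0n.
  rewrite (@card_DB _ _ _ _ 0 0); first by rewrite cards0; case: ifP => _; clear; lia.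
    by move=> ?? ; rewrite in_set0.
  by move=> ?; rewrite in_set0.
have [hEg hsx hEc] := Gs_g hE.
have hj1 : (0 < j)%N by rewrite -hEc; apply/card_gt0P; exists sx.
have hjk : (j <= k)%N by rewrite -hEc; apply: hgk.
have hjs : (j <= s)%N by rewrite -hEc -card_Iseg; apply: subset_leq_card; apply: hIs.
have ekj : ((k%:Z - j%:Z)%R = (k - j)%N%:Z)%R by rewrite subzn.
rewrite ekj /=.
have eDB : #|DBj| = (#|Gs j| * 'C(n - s, k - j) * ((k - j + 1) * (s - j)))%N.
  apply: card_DB.
  - move=> E' Y _ hY hYc; rewrite cardU1n ?hYc ?addn1 //.
    apply/negP=> h; apply: (inIsegH _ (subsetP hY sx h)); by rewrite inIseg.
  - move=> E' hE'; have [hEg' _ hEc'] := Gs_g hE'.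
    by rewrite cardsD (setIidPr (hIs hEg')) card_Iseg hEc'.
have eDC : #|DCj| = (#|Zv j.-1 (Gs j)| * 'C(n - s, k - j))%N by rewrite card_DC.
have eDA : (if (j < k)%N then #|DAj| else 0) =
    (#|Gs j| * binz (n - s) ((k - j)%N%:Z - 1) * 'C(n - s + j + 1 - k, 2))%N.
  case: ltnP => hjk'.
    have -> : ((k - j)%N%:Z - 1 = (k - j - 1)%N%:Z)%R by rewrite subzn //; move: hjk'; clear; lia.
    rewrite card_DA /= mulnA; case: (leqP (k - j - 1) (n - s)) => h.
      by congr (_ * 'C(_, _)); move: h hjk'; clear; lia.
    by rewrite bin_small // !muln0 mul0n.
  have -> : k = j by apply/eqP; rewrite eqn_leq hjk hjk'.
  by rewrite subnn /= muln0 mul0n.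
rewrite eDA eDB eDC /=.
have esj : ((s%:Z - j%:Z)%R = (s - j)%N%:Z)%R by rewrite subzn.
rewrite esj.
clear; lia.
Qed.

End Main.

Unset Implicit Arguments.
Local Open Scope ring_scope.

Theorem lemma3p2 (n k t i : nat) (F g : {set {set 'I_n}}) :
  uniform k F -> t_intersecting t F -> left_compressed F ->
  in_Gstar k F g ->
  gstar_i g i != set0 ->
  let s := splusF g in
  let j := (s + t - i)%N in
  j != i ->
  let F1 := (F :|: DsetF k (gstar_i' g i)) :\: DsetF k (gstar_i g j) in
  (zeta k.-1 F1 F1)%:Z - (zeta k.-1 F F)%:Z >=
      (#|gstar_i g i| * 'C(n - s, k - i) * 'C(n - s + i - k, 2))%:Z
    + (zetav i.-1 s (gstar_i g i) (restr F s) * 'C(n - s, k - i + 1))%:Z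
    + (#|gstar_i g i| * (s - i + 1) * (k - i + 1) * 'C(n - s, k - i + 1))%:Z
    - (#|gstar_i g j| * binz (n - s) (k%:Z - j%:Z - 1) * 'C(n - s + j + 1 - k, 2))%:Z
    - (zetav j.-1 s (gstar_i g j) (restr F s) * binz (n - s) (k%:Z - j%:Z))%:Z
    - (#|gstar_i g j|%:Z * (s%:Z - j%:Z) * (k%:Z - j%:Z + 1)
         * (binz (n - s) (k%:Z - j%:Z))%:Z).
Proof.
move=> hu ht hlc [[hgk hup] [hmin hsmin]] hne s j hji.
rewrite /j /s in hji *; cbv zeta.
case/set0Pn: hne => E0 hE0.
move: (hE0); rewrite inE => /andP [hE0g /andP [/existsP [sx /andP [hsxE0 /eqP hxs]] /eqP hE0c]].
have hs : splusF g = lab sx by rewrite hxs.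
have hF : forall A : {set 'I_n}, (A \in F) = (#|A| == k) && [exists E in g, E \subset A].
  by move=> A; rewrite -hup inE.
have hanti : forall E E' : {set 'I_n}, E \in g -> E' \in g -> E' \subset E -> E' = E.
  move=> E E' hE hE' hsub; move: hE; rewrite {1}hmin inE => /andP [_ /forall_inP h].
  by apply/eqP; exact: (implyP (h E' hE')).
have hIs : forall E : {set 'I_n}, E \in g -> E \subset initseg n (lab sx).
  move=> E hE; apply/subsetP=> y hy; rewrite inE -hs.
  apply: leq_trans (splus_ub hy) _; rewrite /splusF.
  by apply: leq_bigmax_cond.
have hcomp : forall (A : {set 'I_n}) (a b : 'I_n),
    A \in F -> (a < b)%N -> b \in A -> a \notin A -> A :\ b :|: [set a] \in F.
  move=> A a b hA hab hb ha.
  have := hlc a b hab => eD.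
  have : delta F a b A \in Delta a b F by apply: imset_f.
  rewrite eD /delta hb ha /=.
  by case: ifP => // /negbFE.
have hsx1 : (0 < #|E0|)%N by apply/card_gt0P; exists sx.
have hik : (i <= k)%N by rewrite -hE0c; apply: hgk.
have hi1 : (0 < i)%N by rewrite -hE0c.
have hk : (0 < k)%N by apply: leq_trans hi1 hik.
rewrite hs !(gstarE hs).
rewrite hs in hji; exact: (final_ineq hF hanti hIs hcomp hs hgk hji hi1 hik hk).
Qed.
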